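(* Let $G$ be a cubic graph. If $G=G_1\,H\,G_2$ or $G=G_1\,Y\,G_2$, then $G$ is bipartite if and only if $G_1$ and $G_2$ are both bipartite.
   Context: Graphs are finite; multiple edges allowed, loops not. For cubic graphs $G_1,G_2$: $G_1\,Y\,G_2$ is obtained by choosing a vertex $v_1\in G_1$ with neighbors (via its three incident edges) $s_{11},s_{12},s_{13}$ and a vertex $v_2\in G_2$ with neighbors $s_{21},s_{22},s_{23}$, deleting $v_1,v_2$, and adding edges $s_{1j}s_{2j}$ ($j=1,2,3$); equivalently, $G=G_1\,Y\,G_2$ means $G$ has a $3$-edge cut whose two sides, each completed by a new vertex joined to the three cut endpoints on that side, are $G_1$ and $G_2$. $G_1\,H\,G_2$ is obtained by choosing edges $s_{11}s_{12}\in G_1$ and $s_{21}s_{22}\in G_2$, deleting them and adding $s_{11}s_{21}$, $s_{12}s_{22}$; equivalently, $G$ has a $2$-edge cut whose two sides, each completed by an edge joining the two cut endpoints on that side, are $G_1$ and $G_2$. In the decomposition direction the cuts are nontrivial, i.e. $G_1$ and $G_2$ each have fewer vertices than $G$. *)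

(* Defs.v *)
From mathcomp Require Import ssreflect ssrfun ssrbool eqtype ssrnat seq choice fintype finset.
Set Implicit Arguments. Unset Strict Implicit. Unset Printing Implicit Defensive.

(* A finite multigraph without loops: each edge has two (distinct) ends.
   Parallel edges are allowed. The orientation src/tgt is only bookkeeping. *)
Record mgraph := MGraph {
  vtx : finType;
  edg : finType;
  src : edg -> vtx;
  tgt : edg -> vtx;
  loopless : forall e, src e != tgt e }.

Arguments src {m} e.
Arguments tgt {m} e.

Definition incident (G : mgraph) (e : edg G) (v : vtx G) : bool :=
  (src e == v) || (tgt e == v).

(* degree = number of incident edges (no loops, so each counted once) *)
Definition deg (G : mgraph) (v : vtx G) : nat := #|[set e | incident e v]|.

Definition cubic (G : mgraph) : Prop := forall v : vtx G, deg v = 3.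

Definition bipartite (G : mgraph) : Prop :=
  exists c : vtx G -> bool, forall e : edg G, c (src e) != c (tgt e).

Definition mg_iso (G G' : mgraph) : Prop :=
  exists (fv : vtx G -> vtx G') (fe : edg G -> edg G'),
    [/\ bijective fv, bijective fe &
        forall e, ((src (fe e) == fv (src e)) && (tgt (fe e) == fv (tgt e)))
               || ((src (fe e) == fv (tgt e)) && (tgt (fe e) == fv (src e)))].

(* Delete e1 = s11 s12 from G1 and e2 = s21 s22 from G2, add s11 s21, s12 s22.
   Here s11 = src e1, s12 = tgt e1; (s21, s22) = (src e2, tgt e2) if b = false
   and (tgt e2, src e2) if b = true. *)
Section HOp.
Variables (G1 G2 : mgraph) (e1 : edg G1) (e2 : edg G2) (b : bool).

Definition H_vtx : finType := (vtx G1 + vtx G2)%type.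
Definition H_edg : finType :=
  ({e : edg G1 | e != e1} + {e : edg G2 | e != e2} + bool)%type.

Definition s21 : vtx G2 := if b then tgt e2 else src e2.
Definition s22 : vtx G2 := if b then src e2 else tgt e2.

Definition H_src (e : H_edg) : H_vtx :=
  match e with
  | inl (inl e) => inl (src (val e))
  | inl (inr e) => inr (src (val e))
  | inr false => inl (src e1)
  | inr true => inl (tgt e1)
  end.
Definition H_tgt (e : H_edg) : H_vtx :=
  match e with
  | inl (inl e) => inl (tgt (val e))
  | inl (inr e) => inr (tgt (val e))
  | inr false => inr s21
  | inr true => inr s22
  end.

Lemma H_loopless e : H_src e != H_tgt e.
Proof.
case: e => [[e|e]|[]] //=; apply/eqP => -[]; apply/eqP; exact: loopless.
Qed.

Definition Hop : mgraph := @MGraph H_vtx H_edg H_src H_tgt H_loopless.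
End HOp.

Definition other (G : mgraph) (e : edg G) (v : vtx G) : vtx G :=
  if src e == v then tgt e else src e.

Lemma other_ne (G : mgraph) (e : edg G) (v : vtx G) :
  incident e v -> other e v != v.
Proof.
rewrite /incident /other; case: eqP => [<- _|ne /= /eqP Ht].
  by rewrite eq_sym loopless.
by apply/eqP.
Qed.

Lemma src_ne (G : mgraph) (e : edg G) (v : vtx G) : ~~ incident e v -> src e != v.
Proof. by rewrite /incident negb_or => /andP []. Qed.
Lemma tgt_ne (G : mgraph) (e : edg G) (v : vtx G) : ~~ incident e v -> tgt e != v.
Proof. by rewrite /incident negb_or => /andP []. Qed.

(* Delete v1 (with incident edges f1 0, f1 1, f1 2, so s1j = other (f1 j) v1)
   and v2 (likewise), and add the edges s1j s2j for j < 3. *)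
Section YOp.
Variables (G1 G2 : mgraph) (v1 : vtx G1) (v2 : vtx G2)
  (f1 : 'I_3 -> edg G1) (hf1 : forall j, incident (f1 j) v1)
  (f2 : 'I_3 -> edg G2) (hf2 : forall j, incident (f2 j) v2).

Definition Y_vtx : finType := ({x : vtx G1 | x != v1} + {x : vtx G2 | x != v2})%type.
Definition Y_edg : finType :=
  ({e : edg G1 | ~~ incident e v1} + {e : edg G2 | ~~ incident e v2} + 'I_3)%type.

Definition Y_src (e : Y_edg) : Y_vtx :=
  match e with
  | inl (inl e) => inl (exist _ (src (val e)) (src_ne (valP e)))
  | inl (inr e) => inr (exist _ (src (val e)) (src_ne (valP e)))
  | inr j => inl (exist _ (other (f1 j) v1) (other_ne (hf1 j)))
  end.
Definition Y_tgt (e : Y_edg) : Y_vtx :=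
  match e with
  | inl (inl e) => inl (exist _ (tgt (val e)) (tgt_ne (valP e)))
  | inl (inr e) => inr (exist _ (tgt (val e)) (tgt_ne (valP e)))
  | inr j => inr (exist _ (other (f2 j) v2) (other_ne (hf2 j)))
  end.

Lemma Y_loopless e : Y_src e != Y_tgt e.
Proof.
case: e => [[e|e]|j] //=; apply/eqP => -[]; apply/eqP; exact: loopless.
Qed.

Definition Yop : mgraph := @MGraph Y_vtx Y_edg Y_src Y_tgt Y_loopless.
End YOp.

Definition is_H (G G1 G2 : mgraph) : Prop :=
  exists (e1 : edg G1) (e2 : edg G2) (b : bool), mg_iso G (Hop e1 e2 b).

(* G = G1 Y G2 : f1 lists the three (distinct) edges at v1, f2 those at v2 *)
Definition is_Y (G G1 G2 : mgraph) : Prop :=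
  exists (v1 : vtx G1) (v2 : vtx G2)
         (f1 : 'I_3 -> edg G1) (hf1 : forall j, incident (f1 j) v1)
         (f2 : 'I_3 -> edg G2) (hf2 : forall j, incident (f2 j) v2),
    [/\ injective f1, injective f2 & mg_iso G (Yop hf1 hf2)].

(* Main.v *)
Require Import Defs.
From mathcomp Require Import ssreflect ssrfun ssrbool eqtype ssrnat fintype.
From mathcomp Require Import all_boot zify.
Set Implicit Arguments. Unset Strict Implicit.



Lemma sum_eqv (T : finType) (p : pred T) (s : T) :
  \sum_(v | p v) ((s == v) : nat) = p s.
Proof.
rewrite big_mkcond /= (bigD1 s) //= eqxx big1 ?addn0; first by case: (p s).
by move=> v; rewrite eq_sym => /negbTE ->; case: (p v).
Qed.

Lemma dbl (G : mgraph) (p : pred (vtx G)) :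
  \sum_(v | p v) deg v = \sum_(e : edg G) (p (src e) + p (tgt e)).
Proof.
have -> : \sum_(v | p v) deg v = \sum_(v | p v) \sum_(e : edg G) (incident e v : nat).
  apply: eq_bigr => v _; rewrite /deg -sum1_card big_mkcond /=.
  by apply: eq_bigr => e _; rewrite inE; case: (incident e v).
rewrite exchange_big /=; apply: eq_bigr => e _.
rewrite -!sum_eqv -big_split /=; apply: eq_bigr => v _.
rewrite /incident; have := loopless e.
by case: (src e =P v) => [->|_]; case: (tgt e =P v) => [->|_] //=; rewrite eqxx.
Qed.

Lemma key (G : mgraph) (c : vtx G -> bool) (S : {set edg G}) :
  cubic G -> #|S| <= 2 ->
  (forall e, c (src e) == c (tgt e) -> e \in S) ->
  (forall e e', c (src e) == c (tgt e) -> c (src e') == c (tgt e') ->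
     c (src e) = c (src e')) ->
  forall e, c (src e) != c (tgt e).
Proof.
move=> cub hS hm hc.
have Eb := @dbl G c; have Ew := @dbl G (fun v => ~~ c v).
rewrite (eq_bigr (fun _ => 3)) ?sum_nat_const in Eb; last by move=> v _; exact: cub.
rewrite (eq_bigr (fun _ => 3)) ?sum_nat_const in Ew; last by move=> v _; exact: cub.
set P := \sum_(e : edg G) ((c (src e) != c (tgt e)) : nat).
set MB := \sum_(e : edg G) ((c (src e) && c (tgt e)) : nat).
set MW := \sum_(e : edg G) ((~~ c (src e) && ~~ c (tgt e)) : nat).
have Eb' : \sum_(e : edg G) (c (src e) + c (tgt e)) = P + 2 * MB.
  rewrite big_distrr -big_split /=; apply: eq_bigr => e _.
  by case: (c (src e)); case: (c (tgt e)).
have Ew' : \sum_(e : edg G) (~~ c (src e) + ~~ c (tgt e)) = P + 2 * MW.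
  rewrite big_distrr -big_split /=; apply: eq_bigr => e _.
  by case: (c (src e)); case: (c (tgt e)).
have HS : MB + MW <= 2.
  apply: leq_trans hS; rewrite -big_split /= -sum1_card.
  rewrite [X in _ <= X]big_mkcond; apply: leq_sum => e _; have := hm e.
  by case: (c (src e)); case: (c (tgt e)) => //= ->.
have H0 : MB = 0 \/ MW = 0.
  case: (boolP [exists e, c (src e) && c (tgt e)]) => [/existsP [e0 he0]|].
    right; apply/eqP; rewrite sum_nat_eq0; apply/forallP => e; apply/implyP => _.
    have := hc e0 e; move: he0; case/andP => -> ->.
    by case: (c (src e)); case: (c (tgt e)) => //= /(_ isT isT).
  rewrite negb_exists => /forallP hf; left; apply/eqP; rewrite sum_nat_eq0.
  by apply/forallP => e; apply/implyP => _; move: (hf e); case: (_ && _).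
have : MB = 0 /\ MW = 0 by lia.
case=> /eqP; rewrite sum_nat_eq0 => /forallP hB /eqP; rewrite sum_nat_eq0 => /forallP hW e.
move: (hB e) (hW e) => /=.
by case: (c (src e)); case: (c (tgt e)).
Qed.

Lemma iso_bip (G G' : mgraph) : mg_iso G G' -> bipartite G <-> bipartite G'.
Proof.
case=> fv [fe [[gv fgv gfv] [ge fge gfe] hE]]; split=> [[c hc]|[c hc]].
  exists (fun v => c (gv v)) => e'; rewrite -(gfe e').
  move: (hE (ge e')) (hc (ge e')).
  by case/orP => /andP [/eqP -> /eqP ->]; rewrite !fgv // eq_sym.
exists (fun v => c (fv v)) => e; move: (hE e) (hc (fe e)).
by case/orP => /andP [/eqP -> /eqP ->] //; rewrite eq_sym.
Qed.

Lemma other_col (G : mgraph) (c : vtx G -> bool) e v :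
  incident e v -> c (src e) != c (tgt e) -> c (other e v) = ~~ c v.
Proof.
rewrite /incident /other; case: (src e =P v) => [<- _|_ /= /eqP <-].
  by case: (c (src e)); case: (c (tgt e)).
by case: (c (src e)); case: (c (tgt e)).
Qed.

Lemma mono_other (G : mgraph) (c : vtx G -> bool) e v :
  incident e v -> (c (src e) == c (tgt e)) = (c v == c (other e v)).
Proof.
rewrite /incident /other; case: (src e =P v) => [->|_ /= /eqP ->] //.
Qed.

Lemma Yside (G1 : mgraph) (v1 : vtx G1) (f : edg G1) (hf : incident f v1)
  (d : {x : vtx G1 | x != v1} -> bool) :
  cubic G1 ->
  (forall e (h : ~~ incident e v1),
     d (exist _ (src e) (src_ne h)) != d (exist _ (tgt e) (tgt_ne h))) ->
  bipartite G1.
Proof.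
move=> cub hd.
pose u0 : {x : vtx G1 | x != v1} := exist _ (other f v1) (other_ne hf).
pose c1 x := if x == v1 then ~~ d u0 else d (insubd u0 x).
have c1v : c1 v1 = ~~ d u0 by rewrite /c1 eqxx.
have c1x : forall x (h : x != v1), c1 x = d (exist _ x h).
  move=> x h; rewrite /c1 (negbTE h); congr d; apply: val_inj.
  by rewrite val_insubd /= h.
have mono_inc : forall e, incident e v1 -> c1 (src e) == c1 (tgt e) ->
    c1 (src e) = c1 v1.
  move=> e; rewrite /incident; case: (src e =P v1) => [->|_] //= /eqP <- /eqP //.
exists c1; apply: (@key G1 c1 ([set e | incident e v1] :\ f)) => //.
- move: (cub v1); rewrite /deg (cardsD1 f) inE hf /=; lia.
- move=> e he; rewrite !inE.
  case: (boolP (incident e v1)) => hi; last first.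
    by move: he; rewrite (c1x _ (src_ne hi)) (c1x _ (tgt_ne hi)) (negbTE (hd e hi)).
  rewrite andbT; apply/eqP => ef; move: he; rewrite ef.
  rewrite (mono_other c1 hf) c1v (c1x _ (other_ne hf)) -/u0.
  by case: (d u0).
- move=> e e' he he'.
  have ine : forall e, c1 (src e) == c1 (tgt e) -> incident e v1.
    move=> e0 h0; apply/negPn/negP => hi; move: h0.
    by rewrite (c1x _ (src_ne hi)) (c1x _ (tgt_ne hi)) (negbTE (hd e0 hi)).
  by rewrite (mono_inc _ (ine _ he) he) (mono_inc _ (ine _ he') he').
Qed.

Lemma Hbip (G1 G2 : mgraph) (e1 : edg G1) (e2 : edg G2) b :
  cubic G1 -> cubic G2 ->
  (bipartite (Hop e1 e2 b) <-> bipartite G1 /\ bipartite G2).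
Proof.
move=> cub1 cub2; split=> [[c hc]|[[c1 hc1] [c2 hc2]]].
  split.
    exists (fun x => c (inl x)); apply: (@key G1 (fun x => c (inl x)) [set e1]) => //.
    - by rewrite cards1.
    - move=> e he; rewrite inE; apply/negPn/negP => ne.
      by move: (hc (inl (inl (exist _ e ne)))); rewrite /= (eqP he) eqxx.
    - move=> e e' he he'.
      have h : forall e, c (inl (src e)) == c (inl (tgt e)) -> e = e1.
        move=> e0 h0; apply/eqP/negPn/negP => ne.
        by move: (hc (inl (inl (exist _ e0 ne)))); rewrite /= (eqP h0) eqxx.
      by rewrite (h _ he) (h _ he').
  exists (fun x => c (inr x)); apply: (@key G2 (fun x => c (inr x)) [set e2]) => //.
  - by rewrite cards1.
  - move=> e he; rewrite inE; apply/negPn/negP => ne.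
    by move: (hc (inl (inr (exist _ e ne)))); rewrite /= (eqP he) eqxx.
  - move=> e e' he he'.
    have h : forall e, c (inr (src e)) == c (inr (tgt e)) -> e = e2.
      move=> e0 h0; apply/eqP/negPn/negP => ne.
      by move: (hc (inl (inr (exist _ e0 ne)))); rewrite /= (eqP h0) eqxx.
    by rewrite (h _ he) (h _ he').
pose k := c1 (src e1) == c2 (s21 e2 b).
exists (fun v : H_vtx G1 G2 => match v with inl x => c1 x | inr y => xorb (c2 y) k end).
case=> [[e|e]|[]] /=.
- exact: hc1.
- by move: (hc2 (val e)); case: k; case: (c2 _); case: (c2 _).
- rewrite /k /s22 /s21; clear k; move: (hc2 e2) (hc1 e1).
  by case: b; case: (c1 _); case: (c1 _); case: (c2 _); case: (c2 _).
- rewrite /k /s22 /s21; clear k; move: (hc2 e2) (hc1 e1).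
  by case: b; case: (c1 _); case: (c1 _); case: (c2 _); case: (c2 _).
Qed.

Lemma Ybip (G1 G2 : mgraph) (v1 : vtx G1) (v2 : vtx G2)
  (f1 : 'I_3 -> edg G1) (hf1 : forall j, incident (f1 j) v1)
  (f2 : 'I_3 -> edg G2) (hf2 : forall j, incident (f2 j) v2) :
  cubic G1 -> cubic G2 ->
  (bipartite (Yop hf1 hf2) <-> bipartite G1 /\ bipartite G2).
Proof.
move=> cub1 cub2; split=> [[c hc]|[[c1 hc1] [c2 hc2]]].
  split.
    apply: (@Yside G1 v1 (f1 ord0) (hf1 ord0) (fun u => c (inl u))) => // e h.
    move: (hc (inl (inl (exist _ e h)))) => /=.
    by rewrite (bool_irrelevance (src_ne _) (src_ne h)) (bool_irrelevance (tgt_ne _) (tgt_ne h)).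
  apply: (@Yside G2 v2 (f2 ord0) (hf2 ord0) (fun u => c (inr u))) => // e h.
  move: (hc (inl (inr (exist _ e h)))) => /=.
  by rewrite (bool_irrelevance (src_ne _) (src_ne h)) (bool_irrelevance (tgt_ne _) (tgt_ne h)).
pose k := c1 v1 == c2 v2.
exists (fun v : Y_vtx v1 v2 => match v with inl x => c1 (val x) | inr y => xorb (c2 (val y)) k end).
case=> [[e|e]|j] /=.
- exact: hc1.
- by move: (hc2 (val e)); case: k; case: (c2 _); case: (c2 _).
- rewrite (other_col (hf1 j) (hc1 _)) (other_col (hf2 j) (hc2 _)) /k.
  by case: (c1 v1); case: (c2 v2).
Qed.

Theorem lemma2 (G G1 G2 : mgraph) :
  cubic G -> cubic G1 -> cubic G2 ->
  is_H G G1 G2 \/ is_Y G G1 G2 ->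
  (bipartite G <-> bipartite G1 /\ bipartite G2).
Proof.
move=> _ cub1 cub2 [[e1 [e2 [b hi]]]|[v1 [v2 [f1 [hf1 [f2 [hf2 [_ _ hi]]]]]]]].
  by rewrite (iso_bip hi); exact: Hbip.
by rewrite (iso_bip hi); exact: Ybip.
Qed.
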